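(* For any positive integer $k$, in $\mathfrak{h}^1_t[[u]]$, $$S_t\left(\frac{1}{1-z_ku}\right)\ast S_{1-t}\left(\frac{1}{1+z_ku}\right)=1$$ and $$S_{1-2t}\left(\frac{1}{1-z_ku}\right)\ast_t\frac{1}{1+z_ku}=1.$$
   Context: $t,u$ are commuting variables. $\mathfrak{h}_t=\mathbb{Q}[t]\langle x,y\rangle$ ($1$ = empty word), $\mathfrak{h}^1_t=\mathbb{Q}[t]+\mathfrak{h}_ty$, $z_k=x^{k-1}y$, and $\frac1{1\mp z_ku}=\sum_n(\pm1)^nz_k^nu^n$ (concatenation powers). For a parameter $s\in\mathbb{Q}[t]$, $\sigma_s$ is the algebra automorphism of $\mathfrak{h}_t$ with $\sigma_s(x)=x,\sigma_s(y)=sx+y$ and $S_s$ is the $\mathbb{Q}[t]$-linear map with $S_s(1)=1$, $S_s(wa)=\sigma_s(w)a$ for words $w$, letters $a$. For a word $w$, $\delta(w)=1$ if $w=1$, else $0$. The harmonic product $\ast$ on $\mathfrak{h}^1_t$ is the $\mathbb{Q}[t]$-bilinear product with $1\ast w=w\ast1=w$ and $z_kw_1\ast z_lw_2=z_k(w_1\ast z_lw_2)+z_l(z_kw_1\ast w_2)+z_{k+l}(w_1\ast w_2)$; the $t$-harmonic product $\ast_t$ is the $\mathbb{Q}[t]$-bilinear product with $1\ast_t w=w\ast_t1=w$ and $z_kw_1\ast_t z_lw_2=z_k(w_1\ast_t z_lw_2)+z_l(z_kw_1\ast_t w_2)+(1-2t)z_{k+l}(w_1\ast_t w_2)+[1-\delta(w_1)\delta(w_2)](t^2-t)x^{k+l}(w_1\ast_t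 w_2)$ (for words $w_1,w_2\in\mathfrak{h}^1_t$, $k,l\ge1$). Everything extends coefficientwise to power series in $u$. *)

(* Defs.v *)
From mathcomp Require Import all_boot all_order all_algebra.
Set Implicit Arguments. Unset Strict Implicit. Unset Printing Implicit Defensive.
Import GRing.Theory.
Local Open Scope ring_scope.

(* Coefficient ring Q[t]: polynomials over rat, t = 'X. *)
Notation Qt := {poly rat}.

Definition word := seq bool.
Notation lx := false.
Notation ly := true.

(* An element of h_t = Q[t]<x,y> is given as a finite formal Q[t]-linear
   combination of words; two such are equal in h_t iff all their word
   coefficients agree (see [coef]). *)
Definition ht := seq (Qt * word).

Definition coef (p : ht) (w : word) : Qt :=
  \sum_(c <- p) (if c.2 == w then c.1 else 0).

Definition hone : ht := [:: (1, [::])].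
Definition hword (w : word) : ht := [:: (1, w)].
Definition hscale (c : Qt) (p : ht) : ht := [seq (c * a.1, a.2) | a <- p].
Definition hadd (p q : ht) : ht := p ++ q.

Definition hmul (p q : ht) : ht :=
  [seq (a.1 * b.1, a.2 ++ b.2) | a <- p, b <- q].

Definition zk (k : nat) : word := rcons (nseq k.-1 lx) ly.
Definition wpow (w : word) (n : nat) : word := flatten (nseq n w).

(* sigma_s : algebra automorphism with x |-> x, y |-> s x + y *)
Fixpoint sigma_word (s : Qt) (w : word) : ht :=
  match w with
  | [::] => hone
  | a :: w' =>
      hmul (if a then [:: (s, [:: lx]); (1, [:: ly])] else [:: (1, [:: lx])])
           (sigma_word s w')
  end.

(* S_s(1) = 1, S_s(w a) = sigma_s(w) a *)
Definition S_word (s : Qt) (w : word) : ht :=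
  match rev w with
  | [::] => hone
  | a :: r => hmul (sigma_word s (rev r)) (hword [:: a])
  end.

Definition S_map (s : Qt) (p : ht) : ht :=
  flatten [seq hscale a.1 (S_word s a.2) | a <- p].

(* decomposition of a word of h^1 (ending in y, or empty) as z_{k1} ... z_{kr} *)
Fixpoint zdec_aux (c : nat) (w : word) : seq nat :=
  match w with
  | [::] => [::]
  | a :: w' => if a then c.+1 :: zdec_aux 0 w' else zdec_aux c.+1 w'
  end.
Definition zdec (w : word) : seq nat := zdec_aux 0 w.
Definition zword (ks : seq nat) : word := flatten [seq zk k | k <- ks].

(* Generic quasi-shuffle on index lists:
   z_k w1 * z_l w2 = z_k (w1 * z_l w2) + z_l (z_k w1 * w2)
                     + c z_{k+l} (w1 * w2)
                     + [1 - delta(w1) delta(w2)] d x^{k+l} (w1 * w2). *)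
Fixpoint qsh (c d : Qt) (a : seq nat) : seq nat -> ht :=
  match a with
  | [::] => fun b => hword (zword b)
  | k :: a' =>
      fix qsh_b (b : seq nat) : ht :=
        match b with
        | [::] => hword (zword a)
        | l :: b' =>
            hadd (hmul (hword (zk k)) (qsh c d a' b))
           (hadd (hmul (hword (zk l)) (qsh_b b'))
           (hadd (hscale c (hmul (hword (zk (k + l))) (qsh c d a' b')))
                 (hscale (if (a' == [::]) && (b' == [::]) then 0 else d)
                         (hmul (hword (nseq (k + l) lx)) (qsh c d a' b')))))
        end
  end.

Definition qprod (c d : Qt) (p q : ht) : ht :=
  flatten [seq hscale (a.1 * b.1) (qsh c d (zdec a.2) (zdec b.2)) | a <- p, b <- q].

Definition harm (p q : ht) : ht := qprod 1 0 p q.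
Definition tharm (p q : ht) : ht := qprod (1 - 2%:R * 'X) ('X ^+ 2 - 'X) p q.

(* power series in u with coefficients in h_t: n |-> coefficient of u^n *)
Definition hts := nat -> ht.

(* 1/(1 - sgn z u) written with sgn = +1 or -1: coefficient sgn^n z^n *)
Definition geom (sgn : Qt) (w : word) : hts := fun n => [:: (sgn ^+ n, wpow w n)].
Definition S_ser (s : Qt) (A : hts) : hts := fun n => S_map s (A n).
Definition ser_prod (op : ht -> ht -> ht) (A B : hts) : hts :=
  fun n => flatten [seq op (A i) (B (n - i)%N) | i <- iota 0 n.+1].
Definition ser_one : hts := fun n => if n == 0%N then hone else [::].

Definition ser_eq (A B : hts) : Prop := forall n w, coef (A n) w = coef (B n) w.

(* Main.v *)
Require Import Defs.
From mathcomp Require Import all_boot all_order all_algebra.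
From mathcomp Require Import zify ring.
Set Implicit Arguments. Unset Strict Implicit. Unset Printing Implicit Defensive.
Import GRing.Theory.
Local Open Scope ring_scope.

Lemma coef_cat p q w : coef (p ++ q) w = coef p w + coef q w.
Proof. by rewrite /coef big_cat. Qed.
Lemma coef_nil w : coef [::] w = 0. Proof. by rewrite /coef big_nil. Qed.
Lemma coef_cons a p w : coef (a :: p) w = (if a.2 == w then a.1 else 0) + coef p w.
Proof. by rewrite /coef big_cons. Qed.
Lemma coef_hadd p q w : coef (hadd p q) w = coef p w + coef q w.
Proof. exact: coef_cat. Qed.
Lemma coef_hscale c p w : coef (hscale c p) w = c * coef p w.
Proof.
rewrite /coef /hscale big_map mulr_sumr; apply: eq_bigr => a _ /=.
by case: eqP; rewrite ?mulr0.
Qed.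
Lemma coef_hword u w : coef (hword u) w = if u == w then 1 else 0.
Proof. by rewrite /hword coef_cons coef_nil addr0. Qed.
Lemma coef_flatten (L : seq ht) w : coef (flatten L) w = \sum_(l <- L) coef l w.
Proof.
elim: L => [|l L IH]; first by rewrite big_nil coef_nil.
by rewrite /= coef_cat IH big_cons.
Qed.
Lemma coef_hmul_hword u p w :
  coef (hmul (hword u) p) w = \sum_(b <- p) (if u ++ b.2 == w then b.1 else 0).
Proof.
rewrite /hmul /hword /= cats0 /coef big_map.
by apply: eq_bigr => b _ /=; rewrite mul1r.
Qed.

Lemma zk_cat a v : zk a ++ v = nseq a.-1 lx ++ ly :: v.
Proof. by rewrite /zk cat_rcons. Qed.

Lemma nseq_eq i j u v :
  (nseq i lx ++ ly :: u == nseq j lx ++ ly :: v) = (i == j)%N && (u == v).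
Proof. by elim: i j => [|i IH] [|j] //=; rewrite eqseq_cons IH. Qed.

Lemma nseq_eq2 m j u v :
  (nseq m lx ++ u == nseq j lx ++ ly :: v) =
  (m <= j)%N && (u == nseq (j - m) lx ++ ly :: v).
Proof.
elim: m j => [|m IH] [|j] //=.
by rewrite eqseq_cons IH subSS.
Qed.

Lemma cat_nil_eq (u v : word) : (u ++ v == [::]) = (u == [::]) && (v == [::]).
Proof. by case: u. Qed.

Lemma zword_cons a ks : zword (a :: ks) = zk a ++ zword ks.
Proof. by []. Qed.

Lemma zk_nonnil a : (zk a == [::]) = false.
Proof. by rewrite -size_eq0 size_rcons. Qed.

Lemma zword_nil ks : (zword ks == [::]) = (ks == [::]).
Proof. by case: ks => [|a ks] //=; rewrite zword_cons cat_nil_eq zk_nonnil. Qed.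

Definition posl (s : seq nat) := all (fun a => 0 < a)%N s.

Lemma zword_inj A B : posl A -> posl B -> (zword A == zword B) = (A == B).
Proof.
elim: A B => [|a A IH] [|b B] //.
- by move=> _ _; rewrite zword_cons eq_sym cat_nil_eq zk_nonnil.
- by move=> _ _; rewrite zword_cons cat_nil_eq zk_nonnil.
move=> /andP[a0 pA] /andP[b0 pB].
rewrite !zword_cons !zk_cat nseq_eq eqseq_cons IH //.
by case: a b a0 b0 => [|a] [|b].
Qed.

Lemma zdec_aux_cat c m v : zdec_aux c (nseq m lx ++ ly :: v) = (c + m).+1 :: zdec v.
Proof.
elim: m c => [|m IH] c /=; first by rewrite addn0.
by rewrite IH addSnnS.
Qed.

Lemma zdec_zk a v : (0 < a)%N -> zdec (zk a ++ v) = a :: zdec v.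
Proof. by move=> a0; rewrite zk_cat /zdec zdec_aux_cat add0n prednK. Qed.

Lemma zdec_zword ks : posl ks -> zdec (zword ks) = ks.
Proof.
elim: ks => [|a ks IH] //= /andP[a0 pk].
by rewrite zdec_zk // IH.
Qed.

Lemma zdec_aux_pos c w : posl (zdec_aux c w).
Proof. by elim: w c => [|a w IH] c //=; case: a => /=; rewrite IH. Qed.

Lemma zdec_pos w : posl (zdec w).
Proof. exact: zdec_aux_pos. Qed.

Lemma zdec_aux_shift c w :
  zdec_aux c w = if zdec w is e :: r then (c + e)%N :: r else [::].
Proof.
suff H : forall c', zdec_aux (c + c') w =
  if zdec_aux c' w is e :: r then (c + e)%N :: r else [::].
  by rewrite -[c]addn0 H addn0.
elim: w => [|a w IH] c' //=; case: a => /=; first by rewrite addnS.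
by rewrite -addnS IH.
Qed.

Lemma zdec_xs m w : zdec (nseq m lx ++ w) = zdec_aux m w.
Proof.
suff H : forall c, zdec_aux c (nseq m lx ++ w) = zdec_aux (c + m) w.
  by rewrite /zdec H.
by elim: m => [|m IH] c /=; rewrite ?addn0 // IH addSnnS.
Qed.

Lemma nseqS_cat (m : nat) (w : word) : nseq m.+1 lx ++ w = nseq m lx ++ lx :: w.
Proof. by elim: m => //= m ->. Qed.

Lemma zword_zdec_aux c w : w != [::] -> last ly w ->
  zword (zdec_aux c w) = nseq c lx ++ w.
Proof.
elim: w c => [|a w IH] c // _; case: a => /= Hl.
- rewrite zword_cons zk_cat /=.
  case: w IH Hl => [|b w] IH Hl; first by [].
  by rewrite IH.
- case: w IH Hl => [|b w] IH Hl //=.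
  by rewrite IH // nseqS_cat.
Qed.

Lemma zword_zdec w : last ly w -> zword (zdec w) = w.
Proof.
case: w => [|a w] // Hl.
by rewrite /zdec zword_zdec_aux.
Qed.

Lemma qsh_nil_l c d B : qsh c d [::] B = hword (zword B).
Proof. by []. Qed.
Lemma qsh_nil_r c d A : qsh c d A [::] = hword (zword A).
Proof. by case: A. Qed.
Lemma qsh_cons c d a A b B : qsh c d (a :: A) (b :: B) =
  hadd (hmul (hword (zk a)) (qsh c d A (b :: B)))
 (hadd (hmul (hword (zk b)) (qsh c d (a :: A) B))
 (hadd (hscale c (hmul (hword (zk (a + b))) (qsh c d A B)))
       (hscale (if (A == [::]) && (B == [::]) then 0 else d)
               (hmul (hword (nseq (a + b) lx)) (qsh c d A B))))).
Proof. by []. Qed.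

Lemma coef_qsh_cons c d a A b B w : coef (qsh c d (a :: A) (b :: B)) w =
  coef (hmul (hword (zk a)) (qsh c d A (b :: B))) w
 + (coef (hmul (hword (zk b)) (qsh c d (a :: A) B)) w
 + (c * coef (hmul (hword (zk (a + b))) (qsh c d A B)) w
 + (if (A == [::]) && (B == [::]) then 0 else d) *
     coef (hmul (hword (nseq (a + b) lx)) (qsh c d A B)) w)).
Proof.
rewrite qsh_cons.
move: (hmul (hword (zk a)) (qsh c d A (b :: B))) => X1.
move: (hmul (hword (zk b)) (qsh c d (a :: A) B)) => X2.
move: (hmul (hword (zk (a + b))) (qsh c d A B)) => X3.
move: (hmul (hword (nseq (a + b) lx)) (qsh c d A B)) => X4.
by rewrite !coef_hadd !coef_hscale.
Qed.

Lemma coef_hmul_hword_nil u p : u != [::] -> coef (hmul (hword u) p) [::] = 0.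
Proof.
move=> Hu; rewrite coef_hmul_hword big1 // => b _.
by rewrite cat_nil_eq (negbTE Hu).
Qed.

Lemma coef_qsh_nil c d A B : posl A -> posl B ->
  coef (qsh c d A B) [::] = if (A == [::]) && (B == [::]) then 1 else 0.
Proof.
case: A => [|a A]; first by rewrite qsh_nil_l coef_hword zword_nil.
case: B => [|b B]; first by rewrite qsh_nil_r coef_hword zword_nil.
move=> /andP[a0 _] /andP[b0 _].
rewrite coef_qsh_cons !coef_hmul_hword_nil ?mulr0 ?addr0 //;
  try by rewrite zk_nonnil.
by rewrite -size_eq0 size_nseq -lt0n addn_gt0 a0.
Qed.

Lemma cat_eq_split (u v w : word) :
  (u ++ v == w) = (take (size u) w == u) && (v == drop (size u) w).
Proof.
apply/eqP/andP => [<-|[/eqP Ht /eqP ->]].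
  by rewrite take_size_cat // drop_size_cat.
by rewrite -{2}(cat_take_drop (size u) w) Ht.
Qed.

Lemma coef_hmul_hword_split u p w : coef (hmul (hword u) p) w =
  if take (size u) w == u then coef p (drop (size u) w) else 0.
Proof.
rewrite coef_hmul_hword; case: ifP => Ht.
  by rewrite /coef; apply: eq_bigr => b _; rewrite cat_eq_split Ht.
by apply: big1 => b _; rewrite cat_eq_split Ht.
Qed.

Lemma last_zword B : last ly (zword B).
Proof.
elim: B => [|b B IH] //.
by rewrite zword_cons last_cat /zk last_rcons.
Qed.

Lemma last_indep (x y : bool) (v : word) : v != [::] -> last x v = last y v.
Proof. by case: v. Qed.

Lemma piece u p w : last ly u -> ~~ last ly w ->
  (forall v, ~~ last ly v -> coef p v = 0) ->
  (if take (size u) w == u then coef p (drop (size u) w) else 0) = 0.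
Proof.
move=> Hu Hw Hp; case: ifP => // /eqP Ht; apply: Hp.
by move: Hw; rewrite -{1}(cat_take_drop (size u) w) Ht last_cat Hu.
Qed.

Lemma piece_x m p w (dd : Qt) : ~~ last ly w ->
  (forall v, ~~ last ly v -> coef p v = 0) -> dd * coef p [::] = 0 ->
  dd * (if take (size (nseq m lx)) w == nseq m lx
        then coef p (drop (size (nseq m lx)) w) else 0) = 0.
Proof.
move=> Hw Hp H0; case: ifP => [/eqP Ht|]; last by rewrite mulr0.
case E: (drop (size (nseq m lx)) w) => [|x v] //.
rewrite Hp ?mulr0 // -E.
move: Hw; rewrite -{1}(cat_take_drop (size (nseq m lx)) w) Ht last_cat E.
by rewrite (@last_indep _ ly).
Qed.

Lemma coef_qsh_nh1 c d A B w : posl A -> posl B -> ~~ last ly w ->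
  coef (qsh c d A B) w = 0.
Proof.
elim: A B w => [|a A IHA] B w pA pB Hw.
  rewrite qsh_nil_l coef_hword; case: eqP => // E.
  by move: Hw; rewrite -E last_zword.
elim: B w pB Hw => [|b B IHB] w pB Hw.
  rewrite qsh_nil_r coef_hword; case: eqP => // E.
  by move: Hw; rewrite -E last_zword.
case/andP: (pA) => a0 pA'; case/andP: (pB) => b0 pB'.
rewrite coef_qsh_cons !coef_hmul_hword_split.
rewrite piece ?last_rcons //; last by move=> v Hv; apply: IHA.
rewrite piece ?last_rcons //; last by move=> v Hv; apply: IHB.
rewrite piece ?last_rcons //; last by move=> v Hv; apply: IHA.
rewrite piece_x //; first by rewrite mulr0 !addr0.
  by move=> v Hv; apply: IHA.
rewrite coef_qsh_nil //.
by case: ((A == [::]) && (B == [::])); rewrite ?mul0r ?mulr0.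
Qed.

Lemma hz a e X v : (0 < a)%N -> (0 < e)%N ->
  \sum_(x <- X) (if zk a ++ x.2 == zk e ++ v then x.1 else 0) =
  if a == e then coef X v else 0.
Proof.
move=> a0 e0; case: ifP => [/eqP <-|Hae].
  by rewrite /coef; apply: eq_bigr => x _; rewrite !zk_cat nseq_eq eqxx.
apply: big1 => x _; rewrite !zk_cat nseq_eq.
suff -> : (a.-1 == e.-1) = false by [].
by apply/negbTE; move: Hae => /negbT; apply: contra => /eqP H; apply/eqP; lia.
Qed.

Lemma hx m e X v : (0 < e)%N ->
  \sum_(x <- X) (if nseq m lx ++ x.2 == zk e ++ v then x.1 else 0) =
  if (m < e)%N then coef X (zk (e - m) ++ v) else 0.
Proof.
move=> e0; rewrite [zk e ++ v]zk_cat; case: ifP => Hme.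
  rewrite /coef; apply: eq_bigr => x _; rewrite nseq_eq2 zk_cat.
  have -> : (m <= e.-1)%N by lia.
  by have -> : ((e - m).-1 = e.-1 - m)%N by lia.
apply: big1 => x _; rewrite nseq_eq2.
by have -> : (m <= e.-1)%N = false by lia.
Qed.

Lemma coef_qsh_zk c d A B e ks : posl A -> posl B -> posl ks -> (0 < e)%N ->
  coef (qsh c d A B) (zk e ++ zword ks) =
    (if A is a :: A' then (if a == e then coef (qsh c d A' B) (zword ks) else 0) else 0)
  + (if B is b :: B' then (if b == e then coef (qsh c d A B') (zword ks) else 0) else 0)
  + (if A is a :: A' then if B is b :: B' then
        (if (a + b == e)%N then c * coef (qsh c d A' B') (zword ks) else 0)
      + (if (a + b < e)%N then
           d * coef (qsh c d A' B') (zk (e - (a + b)) ++ zword ks) else 0)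
     else 0 else 0).
Proof.
move=> pA pB pk e0.
have pek : posl (e :: ks) by rewrite /= e0.
case: A pA => [|a A] pA.
  case: B pB => [|b B] pB.
    by rewrite qsh_nil_l coef_hword eq_sym cat_nil_eq zk_nonnil !addr0.
  rewrite qsh_nil_l !coef_hword -zword_cons zword_inj // eqseq_cons.
  rewrite zword_inj //; last by case/andP: pB.
  by case: (b == e); rewrite add0r addr0.
case: B pB => [|b B] pB.
  rewrite qsh_nil_r qsh_nil_r !coef_hword -zword_cons zword_inj // eqseq_cons.
  rewrite zword_inj //; last by case/andP: pA.
  by case: (a == e); rewrite !addr0.
case/andP: (pA) => a0 pA'; case/andP: (pB) => b0 pB'.
rewrite coef_qsh_cons !coef_hmul_hword.
rewrite !hz // ?addn_gt0 ?a0 // hx //.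
rewrite -!addrA; congr (_ + (_ + _)).
congr (_ + _); first by case: ifP; rewrite ?mulr0.
case H: ((A == [::]) && (B == [::])).
  case/andP: H => /eqP -> /eqP ->.
  rewrite qsh_nil_l coef_hword eq_sym cat_nil_eq zk_nonnil.
  by case: ifP; rewrite !mulr0 ?mul0r.
by case: ifP; rewrite ?mulr0.
Qed.

Definition icoef (p : ht) (ks : seq nat) : Qt :=
  \sum_(x <- p) (if zdec x.2 == ks then x.1 else 0).

Definition B2 (p q : ht) (F : seq nat -> seq nat -> Qt) : Qt :=
  \sum_(x <- p) x.1 * \sum_(y <- q) y.1 * F (zdec x.2) (zdec y.2).

Lemma coef_qprod c d p q W :
  coef (qprod c d p q) W = B2 p q (fun X Y => coef (qsh c d X Y) W).
Proof.
rewrite /qprod coef_flatten big_allpairs_dep /B2.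
apply: eq_bigr => x _; rewrite mulr_sumr; apply: eq_bigr => y _.
by rewrite coef_hscale mulrA.
Qed.

Lemma eq_B2 p q F G : (forall X Y, posl X -> posl Y -> F X Y = G X Y) ->
  B2 p q F = B2 p q G.
Proof.
move=> H; apply: eq_bigr => x _; congr (_ * _); apply: eq_bigr => y _.
by rewrite H ?zdec_pos.
Qed.

Lemma B2_add p q F G : B2 p q (fun X Y => F X Y + G X Y) = B2 p q F + B2 p q G.
Proof.
rewrite /B2 -big_split; apply: eq_bigr => x _ /=.
by rewrite -mulrDr -big_split; congr (_ * _); apply: eq_bigr => y _; rewrite mulrDr.
Qed.

Lemma B2_scale p q (c : Qt) F : B2 p q (fun X Y => c * F X Y) = c * B2 p q F.
Proof.
rewrite /B2 mulr_sumr; apply: eq_bigr => x _.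
rewrite mulr_sumr mulr_sumr mulr_sumr; apply: eq_bigr => y _.
by rewrite !mulrA [c * x.1]mulrC -!mulrA [c * (y.1 * _)]mulrCA.
Qed.

Lemma B2_sum p q (r : seq nat) (F : nat -> seq nat -> seq nat -> Qt) :
  B2 p q (fun X Y => \sum_(i <- r) F i X Y) = \sum_(i <- r) B2 p q (F i).
Proof.
rewrite /B2 exchange_big /=; apply: eq_bigr => x _.
rewrite -mulr_sumr exchange_big /=; congr (_ * _).
by apply: eq_bigr => y _; rewrite mulr_sumr.
Qed.

Lemma KS p (L : seq (seq nat)) (H : seq nat -> Qt) : uniq L ->
  {subset [seq zdec x.2 | x <- p] <= L} ->
  \sum_(x <- p) x.1 * H (zdec x.2) = \sum_(ks <- L) icoef p ks * H ks.
Proof.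
elim: p => [|x p IH] HL Hsub.
  by rewrite big_nil; symmetry; apply: big1 => ks _; rewrite /icoef big_nil mul0r.
rewrite big_cons IH //; last by move=> z Hz; apply: Hsub; rewrite /= in_cons Hz orbT.
transitivity (\sum_(ks <- L) (if zdec x.2 == ks then x.1 else 0) * H ks
              + \sum_(ks <- L) icoef p ks * H ks); last first.
  by rewrite -big_split; apply: eq_bigr => ks _; rewrite /icoef big_cons mulrDl.
congr (_ + _).
have xL : zdec x.2 \in L by apply: Hsub; rewrite /= in_cons eqxx.
rewrite (bigD1_seq (zdec x.2)) //= eqxx big1 ?addr0 // => ks.
by rewrite eq_sym => /negbTE ->; rewrite mul0r.
Qed.

Lemma B2_congr_l p p' (l : Qt) q F : (forall ks, icoef p ks = l * icoef p' ks) ->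
  B2 p q F = l * B2 p' q F.
Proof.
move=> H; set L := undup [seq zdec x.2 | x <- p ++ p'].
have uL : uniq L by apply: undup_uniq.
rewrite /B2.
rewrite (@KS p L (fun X => \sum_(y <- q) y.1 * F X (zdec y.2)) uL); last first.
  by move=> z Hz; rewrite mem_undup map_cat mem_cat Hz.
rewrite (@KS p' L (fun X => \sum_(y <- q) y.1 * F X (zdec y.2)) uL); last first.
  by move=> z Hz; rewrite mem_undup map_cat mem_cat Hz orbT.
by rewrite mulr_sumr; apply: eq_bigr => ks _; rewrite H mulrA.
Qed.

Lemma B2_swap p q F : B2 p q F = \sum_(y <- q) y.1 * \sum_(x <- p) x.1 * F (zdec x.2) (zdec y.2).
Proof.
rewrite /B2.
under eq_bigr => x _ do rewrite mulr_sumr.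
rewrite exchange_big /=; apply: eq_bigr => y _.
rewrite mulr_sumr; apply: eq_bigr => x _.
by rewrite !mulrA [x.1 * y.1]mulrC.
Qed.

Lemma B2_congr_r p q q' (l : Qt) F : (forall ks, icoef q ks = l * icoef q' ks) ->
  B2 p q F = l * B2 p q' F.
Proof.
move=> H; set L := undup [seq zdec x.2 | x <- q ++ q'].
have uL : uniq L by apply: undup_uniq.
rewrite !B2_swap.
rewrite (@KS q L (fun Y => \sum_(x <- p) x.1 * F (zdec x.2) Y) uL); last first.
  by move=> z Hz; rewrite mem_undup map_cat mem_cat Hz.
rewrite (@KS q' L (fun Y => \sum_(x <- p) x.1 * F (zdec x.2) Y) uL); last first.
  by move=> z Hz; rewrite mem_undup map_cat mem_cat Hz orbT.
by rewrite mulr_sumr; apply: eq_bigr => ks _; rewrite H mulrA.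
Qed.

Definition tail (a : nat) (p : ht) : ht :=
  [seq (x.1, zword (behead (zdec x.2))) | x <- p & head 0%N (zdec x.2) == a].

Lemma posl_behead s : posl s -> posl (behead s).
Proof. by case: s => //= a s /andP[]. Qed.

Lemma zdec_tail_word w : zdec (zword (behead (zdec w))) = behead (zdec w).
Proof. by rewrite zdec_zword // posl_behead // zdec_pos. Qed.

Lemma icoef_tail a p ks : (0 < a)%N -> icoef (tail a p) ks = icoef p (a :: ks).
Proof.
move=> a0; rewrite /icoef /tail big_map big_filter big_mkcond /=.
apply: eq_bigr => x _; rewrite zdec_tail_word.
case: (zdec x.2) => [|b r] /=.
  by have -> : (0 == a)%N = false by lia.
by rewrite eqseq_cons; case: (b == a).
Qed.

Lemma tail_sum a p (H : seq nat -> Qt) : (0 < a)%N ->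
  \sum_(x <- tail a p) x.1 * H (zdec x.2) =
  \sum_(x <- p) x.1 * (if zdec x.2 is b :: r then (if b == a then H r else 0) else 0).
Proof.
move=> a0; rewrite /tail big_map big_filter big_mkcond /=.
apply: eq_bigr => x _; rewrite zdec_tail_word.
case: (zdec x.2) => [|b r] /=.
  have -> : (0 == a)%N = false by lia.
  by rewrite mulr0.
by case: (b == a); rewrite ?mulr0.
Qed.

Lemma B2_tail_l e p q G : (0 < e)%N ->
  B2 p q (fun X Y => if X is a :: X' then (if a == e then G X' Y else 0) else 0)
  = B2 (tail e p) q G.
Proof.
move=> e0; rewrite /B2 (@tail_sum e p (fun X => \sum_(y <- q) y.1 * G X (zdec y.2))) //.
apply: eq_bigr => x _; congr (_ * _).
case: (zdec x.2) => [|b r]; first by rewrite big1 // => y _; rewrite mulr0.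
by case: (b == e) => //; rewrite big1 // => y _; rewrite mulr0.
Qed.

Lemma B2_tail_r e p q G : (0 < e)%N ->
  B2 p q (fun X Y => if Y is b :: Y' then (if b == e then G X Y' else 0) else 0)
  = B2 p (tail e q) G.
Proof.
move=> e0; rewrite /B2; apply: eq_bigr => x _; congr (_ * _).
by rewrite (@tail_sum e q (fun Y => G (zdec x.2) Y)).
Qed.

Lemma sum_pred1_nat m n (j : nat) (F : nat -> Qt) :
  \sum_(m <= i < n) (if j == i then F i else 0) = if (m <= j < n)%N then F j else 0.
Proof.
case: ifP => Hj.
  rewrite (bigD1_seq j) ?mem_index_iota ?iota_uniq //= eqxx big1 ?addr0 //.
  by move=> i; rewrite eq_sym => /negbTE ->.
rewrite big_seq big1 // => i; rewrite mem_index_iota => Hi.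
by case: eqP => // E; move: Hj; rewrite E Hi.
Qed.

Lemma B2_tailsum_l e p q (K : nat -> seq nat -> seq nat -> Qt) :
  (forall a X Y, (0 < a)%N -> (e <= a)%N -> posl X -> posl Y -> K a X Y = 0) ->
  B2 p q (fun X Y => if X is a :: X' then K a X' Y else 0)
  = \sum_(1 <= a < e) B2 (tail a p) q (K a).
Proof.
move=> HK.
transitivity (\sum_(1 <= a < e) \sum_(x <- p) x.1 *
  (if zdec x.2 is b :: r then (if b == a then
     \sum_(y <- q) y.1 * K a r (zdec y.2) else 0) else 0)); last first.
  rewrite big_seq_cond [RHS]big_seq_cond; apply: eq_bigr => a.
  rewrite andbT mem_index_iota => /andP[a1 _].
  by rewrite /B2 (@tail_sum a p (fun X => \sum_(y <- q) y.1 * K a X (zdec y.2))).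
rewrite exchange_big /=; apply: eq_bigr => x _.
rewrite -mulr_sumr; congr (_ * _).
have := zdec_pos x.2.
case: (zdec x.2) => [|b r] /=.
  by move=> _; rewrite big1_eq; apply: big1 => y _; rewrite mulr0.
move=> /andP[b0 pr].
rewrite sum_pred1_nat; case: ifP => // Hb.
rewrite big1 // => y _; rewrite HK ?mulr0 ?zdec_pos //.
by move: Hb; rewrite b0 /= => /negbT; rewrite -leqNgt.
Qed.

Lemma B2_tailsum_r e p q (K : nat -> seq nat -> seq nat -> Qt) :
  (forall b X Y, (0 < b)%N -> (e <= b)%N -> posl X -> posl Y -> K b X Y = 0) ->
  B2 p q (fun X Y => if Y is b :: Y' then K b X Y' else 0)
  = \sum_(1 <= b < e) B2 p (tail b q) (K b).
Proof.
move=> HK.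
rewrite /B2 [RHS]exchange_big /=; apply: eq_bigr => x _.
rewrite -mulr_sumr; congr (_ * _).
transitivity (\sum_(1 <= b < e) \sum_(y <- q) y.1 *
  (if zdec y.2 is b' :: r then (if b' == b then K b (zdec x.2) r else 0) else 0)); last first.
  rewrite big_seq_cond [RHS]big_seq_cond; apply: eq_bigr => b.
  rewrite andbT mem_index_iota => /andP[b1 _].
  by rewrite (@tail_sum b q (fun Y => K b (zdec x.2) Y)).
rewrite exchange_big /=; apply: eq_bigr => y _.
rewrite -mulr_sumr; congr (_ * _).
have := zdec_pos y.2.
case: (zdec y.2) => [|b r] /=.
  by move=> _; rewrite big1.
move=> /andP[b0 pr].
rewrite sum_pred1_nat; case: ifP => // Hb.
rewrite HK ?zdec_pos //.
by move: Hb; rewrite b0 /= => /negbT; rewrite -leqNgt.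
Qed.

Lemma B2_ifs p q (b : bool) (l : Qt) F :
  B2 p q (fun X Y => if b then l * F X Y else 0) = if b then l * B2 p q F else 0.
Proof.
case: b; first exact: B2_scale.
by rewrite /B2 big1 // => x _; rewrite big1 ?mulr0 // => y _; rewrite mulr0.
Qed.

Lemma coef_qprod_zk c d p q e ks : posl ks -> (0 < e)%N ->
  coef (qprod c d p q) (zk e ++ zword ks) =
    coef (qprod c d (tail e p) q) (zword ks)
  + coef (qprod c d p (tail e q)) (zword ks)
  + (c * \sum_(1 <= a < e) \sum_(1 <= b < e)
        (if (a + b == e)%N then coef (qprod c d (tail a p) (tail b q)) (zword ks) else 0)
   + d * \sum_(1 <= a < e) \sum_(1 <= b < e)
        (if (a + b < e)%N then
           coef (qprod c d (tail a p) (tail b q)) (zk (e - (a + b)) ++ zword ks)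
         else 0)).
Proof.
move=> pk e0.
rewrite !coef_qprod.
rewrite (eq_B2 _ _ (fun X Y pX pY => coef_qsh_zk c d pX pY pk e0)).
rewrite !B2_add B2_tail_l // B2_tail_r //.
congr (_ + _ + _).
set K := fun a b (A' B' : seq nat) =>
  (if (a + b == e)%N then c * coef (qsh c d A' B') (zword ks) else 0)
+ (if (a + b < e)%N then d * coef (qsh c d A' B') (zk (e - (a + b)) ++ zword ks) else 0).
rewrite (@B2_tailsum_l e p q (fun a X' Y => if Y is b :: B' then K a b X' B' else 0)); last first.
  move=> a X [|b Y] a0 ea pX pY //; rewrite /K.
  case/andP: pY => b0 _.
  have -> : (a + b == e)%N = false by lia.
  have -> : (a + b < e)%N = false by lia.
  by rewrite addr0.
rewrite mulr_sumr mulr_sumr -big_split /=.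
rewrite big_seq_cond [RHS]big_seq_cond; apply: eq_bigr => a.
rewrite andbT mem_index_iota => /andP[a1 _].
rewrite (@B2_tailsum_r e (tail a p) q (fun b X Y => K a b X Y)); last first.
  move=> b X Y b0 eb _ _; rewrite /K.
  have -> : (a + b == e)%N = false by lia.
  have -> : (a + b < e)%N = false by lia.
  by rewrite addr0.
rewrite mulr_sumr mulr_sumr -big_split /=.
apply: eq_bigr => b _.
rewrite /K B2_add !B2_ifs !coef_qprod.
by case: (a + b == e)%N; case: (a + b < e)%N; rewrite ?mulr0.
Qed.

Ltac simp := rewrite /= ?(mulr0n, mulr1n, mul0r, mulr0, mul1r, mulr1, add0r, addr0).

Lemma L4 n m1 m2 (G : nat -> nat -> Qt) :
  \sum_(0 <= i < n.+1)
     ((m1 <= i)%N%:R * (m2 <= n - i)%N%:R * G (i - m1)%N (n - i - m2)%N) =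
  (m1 + m2 <= n)%N%:R * \sum_(0 <= j < (n - (m1 + m2)).+1) G j (n - (m1 + m2) - j)%N.
Proof.
case: (leqP (m1 + m2) n) => H; last first.
  rewrite mul0r big_nat big1 // => i /andP[_ Hi].
  case: (boolP (m1 <= i)%N) => h1; case: (boolP (m2 <= n - i)%N) => h2 /=;
    rewrite /= ?mul0r ?mulr0 ?mul0r //; exfalso; lia.
rewrite /= mul1r (@big_cat_nat _ _ _ m1) //=; last by lia.
rewrite big_nat big1 ?add0r; last by move=> i /andP[_ Hi]; rewrite leqNgt Hi; simp.
rewrite -{1}[m1]add0n big_addn.
rewrite (@big_cat_nat _ _ _ (n - (m1 + m2)).+1) //=; last by lia.
rewrite [X in _ + X = _](_ : _ = 0) ?addr0; last first.
  rewrite big_nat big1 // => i /andP[Hi Hi'].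
  have -> : (m2 <= n - (i + m1))%N = false by lia.
  by simp.
rewrite big_nat [RHS]big_nat; apply: eq_bigr => i /andP[_ Hi].
have -> : (m1 <= i + m1)%N by lia.
have -> : (m2 <= n - (i + m1))%N by lia.
simp; congr (G _ _); lia.
Qed.

Lemma ML k m (g : nat -> Qt) : (0 < k)%N -> (forall a, ~~ (k %| a)%N -> g a = 0) ->
  \sum_(1 <= a < m * k) g a = \sum_(1 <= a' < m) g (a' * k)%N.
Proof.
move=> k0 Hg; elim: m => [|m IH]; first by rewrite mul0n !big_geq.
case: m IH => [|m] IH.
  rewrite mul1n [RHS]big_geq // big_nat big1 // => a /andP[a1 ak].
  by apply: Hg; apply/negP => /(dvdn_leq a1); rewrite leqNgt ak.
rewrite (@big_cat_nat _ _ _ (m.+1 * k)) //=; last by rewrite leq_mul2r leqnSn orbT.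
  2: by rewrite muln_gt0 k0.
rewrite IH [RHS]big_nat_recr //=; congr (_ + _).
rewrite big_ltn; last by rewrite ltn_mul2r k0 ltnSn.
rewrite big_nat big1 ?addr0 // => a /andP[a1 a2].
apply: Hg; apply/negP => Hd.
have H1 : (k %| a - m.+1 * k)%N by rewrite dvdn_sub // dvdn_mull.
have H2 : (0 < a - m.+1 * k)%N by lia.
have := dvdn_leq H2 H1; rewrite mulSnr in a2; lia.
Qed.

Definition family (k : nat) (A : nat -> ht) (al : nat -> Qt) : Prop :=
  [/\ forall ks, icoef (A 0%N) ks = (ks == [::])%:R,
      forall i, (0 < i)%N -> icoef (A i) [::] = 0,
      forall i m ks, (0 < m)%N ->
        icoef (A i) ((m * k)%N :: ks) = (m <= i)%N%:R * al m * icoef (A (i - m)%N) ks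
    & forall i a ks, ~~ (k %| a)%N -> icoef (A i) (a :: ks) = 0].

Section Gen.
Variables (c d : Qt) (k : nat) (A B : nat -> ht) (al be : nat -> Qt).
Hypothesis k0 : (0 < k)%N.
Hypothesis fA : family k A al.
Hypothesis fB : family k B be.

Lemma TA_mul m i q W : (0 < m)%N ->
  coef (qprod c d (tail (m * k) (A i)) q) W =
  (m <= i)%N%:R * al m * coef (qprod c d (A (i - m)%N) q) W.
Proof.
case: fA => _ _ Hm _ m0; rewrite !coef_qprod; apply: B2_congr_l => ks.
by rewrite icoef_tail ?muln_gt0 ?m0 // Hm.
Qed.

Lemma TA_ndvd a i q W : (0 < a)%N -> ~~ (k %| a)%N ->
  coef (qprod c d (tail a (A i)) q) W = 0.
Proof.
case: fA => _ _ _ Hn a0 ka; rewrite !coef_qprod.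
rewrite (@B2_congr_l _ [::] 0) ?mul0r // => ks.
by rewrite icoef_tail // Hn // mul0r.
Qed.

Lemma TB_mul m j p W : (0 < m)%N ->
  coef (qprod c d p (tail (m * k) (B j))) W =
  (m <= j)%N%:R * be m * coef (qprod c d p (B (j - m)%N)) W.
Proof.
case: fB => _ _ Hm _ m0; rewrite !coef_qprod; apply: B2_congr_r => ks.
by rewrite icoef_tail ?muln_gt0 ?m0 // Hm.
Qed.

Lemma TB_ndvd b j p W : (0 < b)%N -> ~~ (k %| b)%N ->
  coef (qprod c d p (tail b (B j))) W = 0.
Proof.
case: fB => _ _ _ Hn b0 kb; rewrite !coef_qprod.
rewrite (@B2_congr_r _ _ [::] 0) ?mul0r // => ks.
by rewrite icoef_tail // Hn // mul0r.
Qed.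

Definition T n W := \sum_(0 <= i < n.+1) coef (qprod c d (A i) (B (n - i)%N)) W.

Lemma TA1 m n W : (0 < m)%N ->
  \sum_(0 <= i < n.+1) coef (qprod c d (tail (m * k) (A i)) (B (n - i)%N)) W =
  al m * ((m <= n)%N%:R * T (n - m)%N W).
Proof.
move=> m0.
have := L4 n m 0 (fun i j => coef (qprod c d (A i) (B j)) W).
rewrite addn0 => <-; rewrite mulr_sumr; apply: eq_bigr => i _.
rewrite TA_mul // leq0n subn0; simp; ring.
Qed.

Lemma TB1 m n W : (0 < m)%N ->
  \sum_(0 <= i < n.+1) coef (qprod c d (A i) (tail (m * k) (B (n - i)%N))) W =
  be m * ((m <= n)%N%:R * T (n - m)%N W).
Proof.
move=> m0.
have := L4 n 0 m (fun i j => coef (qprod c d (A i) (B j)) W).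
rewrite add0n => <-; rewrite mulr_sumr; apply: eq_bigr => i _.
rewrite TB_mul // leq0n subn0; simp; ring.
Qed.

Lemma TT a b n W : (0 < a)%N -> (0 < b)%N ->
  \sum_(0 <= i < n.+1) coef (qprod c d (tail a (A i)) (tail b (B (n - i)%N))) W =
  if (k %| a)%N && (k %| b)%N then
    al (a %/ k)%N * be (b %/ k)%N *
      ((a %/ k + b %/ k <= n)%N%:R * T (n - (a %/ k + b %/ k))%N W)
  else 0.
Proof.
move=> a0 b0.
case: (boolP (k %| a)%N) => ka /=; last by rewrite big1 // => i _; rewrite TA_ndvd.
case: (boolP (k %| b)%N) => kb /=; last by rewrite big1 // => i _; rewrite TB_ndvd.
set a' := (a %/ k)%N; set b' := (b %/ k)%N.
have Ea : a = (a' * k)%N by rewrite divnK.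
have Eb : b = (b' * k)%N by rewrite divnK.
have a'0 : (0 < a')%N by move: a0; rewrite Ea muln_gt0 => /andP[].
have b'0 : (0 < b')%N by move: b0; rewrite Eb muln_gt0 => /andP[].
have := L4 n a' b' (fun i j => coef (qprod c d (A i) (B j)) W).
rewrite /T => <-; rewrite mulr_sumr; apply: eq_bigr => i _.
rewrite Ea Eb TA_mul // TB_mul //.
rewrite !mulrA; congr (_ * _).
by rewrite mulrC !mulrA [_ * al a']mulrC -!mulrA; congr (_ * _); rewrite mulrCA.
Qed.


Lemma coef_qprod_nil p q : coef (qprod c d p q) [::] = icoef p [::] * icoef q [::].
Proof.
rewrite coef_qprod /B2 /icoef mulr_suml; apply: eq_bigr => x _.
rewrite mulr_sumr; case: (boolP (zdec x.2 == [::])) => hx.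
  rewrite mulr_sumr; apply: eq_bigr => y _.
  rewrite coef_qsh_nil ?zdec_pos // hx /=.
  by case: (zdec y.2 == [::]); simp.
rewrite mul0r; apply: big1 => y _.
by rewrite coef_qsh_nil ?zdec_pos // (negbTE hx) /=; simp.
Qed.

Lemma coef_qprod_nh1 p q W : ~~ last ly W -> coef (qprod c d p q) W = 0.
Proof.
move=> hW; rewrite coef_qprod /B2 big1 // => x _.
by rewrite big1 ?mulr0 // => y _; rewrite coef_qsh_nh1 ?zdec_pos ?mulr0.
Qed.

Lemma coef_ser_prod n W : coef (ser_prod (qprod c d) A B n) W = T n W.
Proof. by rewrite /ser_prod coef_flatten big_map /T /index_iota subn0. Qed.

Lemma sum_if (r : seq nat) (b : bool) (F : nat -> Qt) :
  \sum_(i <- r) (if b then F i else 0) = if b then \sum_(i <- r) F i else 0.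
Proof. by case: b => //; rewrite big1. Qed.

Lemma SW n e (phi : nat -> nat -> bool) (W' : nat -> nat -> word) :
  \sum_(0 <= i < n.+1) \sum_(1 <= a < e) \sum_(1 <= b < e)
     (if phi a b then coef (qprod c d (tail a (A i)) (tail b (B (n - i)%N))) (W' a b) else 0)
  = \sum_(1 <= a < e) \sum_(1 <= b < e)
     (if phi a b then
        (if (k %| a)%N && (k %| b)%N then
           al (a %/ k)%N * be (b %/ k)%N *
             ((a %/ k + b %/ k <= n)%N%:R * T (n - (a %/ k + b %/ k))%N (W' a b))
         else 0)
      else 0).
Proof.
rewrite exchange_big; apply: eq_big_nat => a /andP[a1 _].
rewrite exchange_big; apply: eq_big_nat => b /andP[b1 _].
by rewrite sum_if TT.
Qed.

Lemma one0 m W : W != [::] -> coef (ser_one m) W = 0.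
Proof.
move=> hW; rewrite /ser_one; case: (m == 0%N); last exact: coef_nil.
by rewrite coef_hword eq_sym (negbTE hW).
Qed.

Hypothesis Hg : forall m, (0 < m)%N ->
  al m + be m + c * \sum_(1 <= a < m) \sum_(1 <= b < m)
      (if (a + b == m)%N then al a * be b else 0) = 0.

Theorem GEN n W : coef (ser_prod (qprod c d) A B n) W = coef (ser_one n) W.
Proof.
rewrite coef_ser_prod.
elim/ltn_ind: n W => n IH W.
case: (boolP (last ly W)) => hW; last first.
  have -> : coef (ser_one n) W = 0 by apply: one0; case: (W) hW.
  by rewrite /T big1 // => i _; rewrite coef_qprod_nh1.
rewrite -(zword_zdec hW).
have := zdec_pos W; case: (zdec W) => [|e ks] pW.
  have -> : zword [::] = [::] by [].
  rewrite /T; under eq_bigr do rewrite coef_qprod_nil.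
  case: fA => A0 An _ _; case: fB => B0 Bn _ _.
  case: n IH => [|n] IH.
    by rewrite big_nat1 A0 B0 /ser_one /= coef_hword eqxx; simp.
  rewrite /ser_one /= coef_nil big_nat big1 // => i /andP[_ Hi].
  case: i Hi => [|i] Hi; first by rewrite subn0 Bn ?mulr0.
  by rewrite An ?mul0r.
case/andP: pW => e0 pk.
rewrite zword_cons one0; last by rewrite cat_nil_eq zk_nonnil.
rewrite /T; under eq_bigr do rewrite coef_qprod_zk //.
rewrite !big_split /= -!mulr_sumr !SW.
have -> : \sum_(1 <= a < e) \sum_(1 <= b < e)
    (if (a + b < e)%N then
       (if (k %| a)%N && (k %| b)%N then
          al (a %/ k)%N * be (b %/ k)%N *
          ((a %/ k + b %/ k <= n)%N%:R *
           T (n - (a %/ k + b %/ k))%N (zk (e - (a + b)) ++ zword ks))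
        else 0)
     else 0) = 0.
  rewrite big_nat big1 // => a /andP[a1 _].
  rewrite big_nat big1 // => b /andP[b1 _].
  case: ifP => // _; case: ifP => // /andP[ka kb].
  have a'0 : (0 < a %/ k)%N by rewrite divn_gt0 // dvdn_leq.
  case: (leqP (a %/ k + b %/ k) n) => H; last by simp.
  rewrite -zword_cons IH; last by move: a'0 H; generalize (a %/ k)%N (b %/ k)%N; intros; lia.
  by rewrite one0 ?mulr0 // zword_nil.
rewrite mulr0 addr0.
case: (boolP (k %| e)%N) => ke; last first.
  rewrite big_nat big1; last by move=> i _; rewrite TA_ndvd.
  rewrite big_nat big1; last by move=> i _; rewrite TB_ndvd.
  rewrite big_nat big1; first by rewrite mulr0; simp.
  move=> a /andP[a1 _]; rewrite big_nat big1 // => b /andP[b1 _].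
  case: ifP => // /eqP Hab; case: ifP => // /andP[ka kb].
  by move: ke; rewrite -Hab dvdn_add.
set m := (e %/ k)%N.
have Ee : e = (m * k)%N by rewrite divnK.
have m0 : (0 < m)%N by rewrite divn_gt0 // dvdn_leq.
rewrite Ee TA1 // TB1 //.
rewrite (@ML k m) //; last first.
  move=> a ka; rewrite big1 // => b _.
  by rewrite (negbTE ka) /=; case: ifP.
rewrite (eq_big_nat _ _ (F2 := fun a' => \sum_(1 <= b' < m)
   (if (a' + b' == m)%N then al a' * be b' * ((m <= n)%N%:R * T (n - m)%N (zword ks)) else 0))); last first.
  move=> a' _.
  rewrite (@ML k m) //; last first.
    by move=> b kb; rewrite (negbTE kb) andbF; case: ifP.
  apply: eq_bigr => b' _.
  rewrite -mulnDl eqn_pmul2r //; case: ifP => // /eqP Hab.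
  by rewrite !dvdn_mull ?dvdnn //= !mulnK // Hab.
set X := ((m <= n)%N%:R * T (n - m)%N (zword ks)).
have -> : \sum_(1 <= a' < m) \sum_(1 <= b' < m)
    (if (a' + b' == m)%N then al a' * be b' * X else 0)
  = (\sum_(1 <= a' < m) \sum_(1 <= b' < m)
    (if (a' + b' == m)%N then al a' * be b' else 0)) * X.
  rewrite mulr_suml; apply: eq_bigr => a' _.
  rewrite mulr_suml; apply: eq_bigr => b' _.
  by case: ifP; simp.
have := Hg m0 => HH.
transitivity ((al m + be m + c * \sum_(1 <= a < m) \sum_(1 <= b < m)
      (if (a + b == m)%N then al a * be b else 0)) * X); last by rewrite HH mul0r.
ring.
Qed.

End Gen.

Lemma hmul_hone_l p : hmul hone p = p.
Proof.
rewrite /hmul /= cats0.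
by elim: p => //= [[x w]] p ->; rewrite mul1r.
Qed.

Lemma hmul_cons a p q :
  hmul (a :: p) q = [seq (a.1 * b.1, a.2 ++ b.2) | b <- q] ++ hmul p q.
Proof. by []. Qed.

Lemma hmul_cat p1 p2 q : hmul (p1 ++ p2) q = hmul p1 q ++ hmul p2 q.
Proof. exact: allpairs_cat. Qed.

Lemma hmul_assoc p q r : hmul (hmul p q) r = hmul p (hmul q r).
Proof.
elim: p => [|a p IH] //.
rewrite hmul_cons hmul_cat IH hmul_cons; congr (_ ++ _).
rewrite /hmul allpairs_mapl map_allpairs; apply: eq_allpairs => b c /=.
by rewrite mulrA catA.
Qed.

Lemma sigma_cat s u v :
  sigma_word s (u ++ v) = hmul (sigma_word s u) (sigma_word s v).
Proof.
elim: u => [|a u IH] /=; first by rewrite hmul_hone_l.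
by rewrite IH hmul_assoc.
Qed.

Lemma S_word_cat s u w : w != [::] ->
  S_word s (u ++ w) = hmul (sigma_word s u) (S_word s w).
Proof.
case/lastP: w => [|w a] // _.
by rewrite -rcons_cat /S_word !rev_rcons !revK sigma_cat hmul_assoc.
Qed.

Lemma sigma_nseq s j : sigma_word s (nseq j lx) = [:: (1, nseq j lx)].
Proof. by elim: j => //= j ->; rewrite /hmul /= mulr1. Qed.

Section Fam.
Variables (k : nat) (s : Qt).
Hypothesis k0 : (0 < k)%N.

Lemma sigma_zk : sigma_word s (zk k) = [:: (s, nseq k lx); (1, zk k)].
Proof.
by rewrite /zk -cats1 sigma_cat sigma_nseq /= /hmul /= !mulr1 !mul1r -nseqS_cat cats0 prednK.
Qed.

Definition G i := S_word s (wpow (zk k) i).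

Lemma G0 : G 0 = hone.
Proof. by []. Qed.

Lemma G1 : G 1 = [:: (1, zk k)].
Proof.
rewrite /G /wpow /= cats0 /S_word /zk rev_rcons revK sigma_nseq /hmul /=.
by rewrite mulr1 cats1.
Qed.

Lemma GS i : G i.+2 =
  [seq (s * b.1, nseq k lx ++ b.2) | b <- G i.+1] ++
  ([seq (1 * b.1, zk k ++ b.2) | b <- G i.+1] ++ [::]).
Proof.
rewrite /G.
have -> : wpow (zk k) i.+2 = zk k ++ wpow (zk k) i.+1 by [].
rewrite S_word_cat; last first.
  by rewrite /wpow /= -/(wpow (zk k) i) cat_nil_eq zk_nonnil.
by rewrite sigma_zk.
Qed.

Lemma icoef_cat p q ks : icoef (p ++ q) ks = icoef p ks + icoef q ks.
Proof. by rewrite /icoef big_cat. Qed.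

Lemma icoef_nil ks : icoef [::] ks = 0.
Proof. by rewrite /icoef big_nil. Qed.

Lemma icoef_pre_zk (l : Qt) p c ks :
  icoef [seq (l * b.1, zk k ++ b.2) | b <- p] (c :: ks) =
  l * (if k == c then icoef p ks else 0).
Proof.
rewrite /icoef big_map; case: ifP => kc.
  rewrite mulr_sumr; apply: eq_bigr => b _ /=.
  by rewrite zdec_zk // eqseq_cons kc /=; case: ifP; simp.
rewrite mulr0; apply: big1 => b _ /=.
by rewrite zdec_zk // eqseq_cons kc.
Qed.

Lemma icoef_pre_zk_nil (l : Qt) p :
  icoef [seq (l * b.1, zk k ++ b.2) | b <- p] [::] = 0.
Proof. by rewrite /icoef big_map big1 // => b _ /=; rewrite zdec_zk. Qed.

Lemma icoef_pre_x (l : Qt) p c ks :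
  icoef [seq (l * b.1, nseq k lx ++ b.2) | b <- p] (c :: ks) =
  l * (if (k < c)%N then icoef p ((c - k)%N :: ks) else 0).
Proof.
rewrite /icoef big_map; case: ifP => kc.
  rewrite mulr_sumr; apply: eq_bigr => b _ /=.
  rewrite zdec_xs zdec_aux_shift.
  have := zdec_pos b.2; case: (zdec b.2) => [|e r] /=.
    by move=> _; rewrite mulr0.
  case/andP => e0 _; rewrite !eqseq_cons.
  have -> : (k + e == c)%N = (e == c - k)%N by apply/idP/idP => /eqP H; apply/eqP; lia.
  by case: ifP; rewrite ?mulr0.
rewrite mulr0; apply: big1 => b _ /=.
rewrite zdec_xs zdec_aux_shift.
have := zdec_pos b.2; case: (zdec b.2) => [|e r] //= /andP[e0 _].
rewrite eqseq_cons.
by have -> : (k + e == c)%N = false by apply/negbTE/eqP; lia.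
Qed.

Lemma icoef_pre_x_nil (l : Qt) p :
  icoef [seq (l * b.1, nseq k lx ++ b.2) | b <- p] [::] = l * icoef p [::].
Proof.
rewrite /icoef big_map mulr_sumr; apply: eq_bigr => b _ /=.
rewrite zdec_xs zdec_aux_shift.
by case: (zdec b.2) => [|e r] //=; rewrite mulr0.
Qed.

Lemma icoef_hone ks : icoef hone ks = (ks == [::])%:R.
Proof.
rewrite /icoef /hone big_cons big_nil addr0 /=.
by rewrite eq_sym; case: (ks == [::]).
Qed.

Lemma icoef_single x w ks : icoef [:: (x, w)] ks = if zdec w == ks then x else 0.
Proof. by rewrite /icoef big_cons big_nil addr0. Qed.

Lemma zdec_zk1 : zdec (zk k) = [:: k].
Proof. by rewrite -[zk k]cats0 zdec_zk. Qed.

Lemma Gnil i : (0 < i)%N -> icoef (G i) [::] = 0.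
Proof.
case: i => // i _; elim: i => [|i IH].
  by rewrite G1 /icoef big_cons big_nil /= zdec_zk1 /= addr0.
by rewrite GS !icoef_cat icoef_pre_x_nil icoef_pre_zk_nil icoef_nil IH; simp.
Qed.

Lemma Grec i :
  (forall m ks, (0 < m)%N ->
     icoef (G i) ((m * k)%N :: ks) = (m <= i)%N%:R * s ^+ m.-1 * icoef (G (i - m)%N) ks)
  /\ (forall a ks, ~~ (k %| a)%N -> icoef (G i) (a :: ks) = 0).
Proof.
elim: i {-2}i (leqnn i) => [|N IHN] i.
  rewrite leqn0 => /eqP ->; split.
    move=> m ks m0; rewrite G0 icoef_hone.
    have -> : (m <= 0)%N = false by lia.
    by simp.
  by move=> a ks _; rewrite G0 icoef_hone; simp.
move=> HiN; case: i HiN => [|[|i]] HiN.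
- by apply: IHN.
- split.
    move=> m ks m0; rewrite G1 icoef_single zdec_zk1.
    rewrite eqseq_cons.
    case: m m0 => [|[|m]] // _.
      rewrite mul1n eqxx /= expr0 (_ : (1 - 1)%N = 0%N) // G0 icoef_hone eq_sym.
      by case: (ks == [::]); simp.
    have -> : (k == m.+2 * k)%N = false by apply/negbTE/eqP; rewrite mulSn; lia.
    by simp.
  move=> a ks ka; rewrite G1 icoef_single zdec_zk1.
  rewrite eqseq_cons.
  suff -> : (k == a) = false by [].
  by apply: contraNF ka => /eqP <-.
have [IHm IHd] := IHN i.+1 (ltnSE HiN).
split.
  move=> m ks m0; rewrite GS !icoef_cat icoef_pre_x icoef_pre_zk icoef_nil addr0.
  case: m m0 => [|[|m]] // _.
    by rewrite mul1n ltnn eqxx /= subSS subn0 expr0; simp.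
  have -> : (k < m.+2 * k)%N by rewrite mulSn; lia.
  have -> : (k == m.+2 * k)%N = false by apply/negbTE/eqP; rewrite mulSn; lia.
  have -> : (m.+2 * k - k = m.+1 * k)%N by rewrite mulSn; lia.
  rewrite IHm //; simp.
  rewrite [(m.+1 < i.+2)%N]ltnS !subSS exprS.
  set X := (m < i.+1)%N%:R; set C := icoef _ _.
  by rewrite !mulrA [s * X]mulrC.
move=> a ks ka; rewrite GS !icoef_cat icoef_pre_x icoef_pre_zk icoef_nil addr0.
have -> : (k == a) = false by apply: contraNF ka => /eqP <-.
case: ifP => ka'; last by simp.
rewrite IHd; first by simp.
apply: contra ka => Hd.
have -> : a = (a - k + k)%N by lia.
by rewrite dvdn_add.
Qed.

Definition Sfam (e : Qt) i := S_ser s (geom e (zk k)) i.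

Lemma icoef_Sfam e i ks : icoef (Sfam e i) ks = e ^+ i * icoef (G i) ks.
Proof.
rewrite /Sfam /S_ser /geom /S_map /= cats0 /icoef /hscale big_map mulr_sumr.
by apply: eq_bigr => b _ /=; case: ifP; rewrite ?mulr0.
Qed.

Lemma family_S e : family k (Sfam e) (fun m => e ^+ m * s ^+ m.-1).
Proof.
split.
- by move=> ks; rewrite icoef_Sfam G0 icoef_hone expr0 mul1r.
- by move=> i i0; rewrite icoef_Sfam Gnil // mulr0.
- move=> i m ks m0; rewrite !icoef_Sfam; have [IHm _] := Grec i.
  rewrite IHm //.
  case: (leqP m i) => H; last by simp.
  simp.
  by rewrite -{1}(subnKC H) exprD; ring.
- by move=> i a ks ka; rewrite icoef_Sfam; have [_ IHd] := Grec i; rewrite IHd // mulr0.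
Qed.

Lemma zdec_wpow j : zdec (wpow (zk k) j) = nseq j k.
Proof.
elim: j => // j IH.
have -> : wpow (zk k) j.+1 = zk k ++ wpow (zk k) j by [].
by rewrite zdec_zk // IH.
Qed.

Lemma icoef_geom e j ks : icoef (geom e (zk k) j) ks = e ^+ j * (nseq j k == ks)%:R.
Proof.
rewrite /geom /icoef big_cons big_nil addr0 /= zdec_wpow.
by case: (nseq j k == ks); simp.
Qed.

Lemma family_geom e : family k (geom e (zk k)) (fun m => e ^+ m * 0 ^+ m.-1).
Proof.
split.
- by move=> ks; rewrite icoef_geom expr0 mul1r eq_sym.
- by move=> i i0; rewrite icoef_geom; case: i i0 => //= i _; simp.
- move=> i m ks m0; rewrite !icoef_geom.
  case: i => [|i].
    have -> : (m <= 0)%N = false by lia.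
    by case: (m * k)%N; simp.
  rewrite /= eqseq_cons.
  case: m m0 => [|[|m]] // _.
    by rewrite mul1n eqxx /= subSS subn0 expr0 exprS; simp; ring.
  have -> : (k == m.+2 * k)%N = false by apply/negbTE/eqP; rewrite mulSn; lia.
  by rewrite /= expr0n /=; simp.
- move=> i a ks ka; rewrite icoef_geom.
  case: i => [|i] /=; first by case: ks => //=; simp.
  rewrite eqseq_cons.
  have -> : (k == a) = false by apply: contraNF ka => /eqP <-.
  by simp.
Qed.

End Fam.

Lemma collapse (f : nat -> nat -> Qt) m :
  \sum_(1 <= a < m) \sum_(1 <= b < m) (if (a + b == m)%N then f a b else 0) =
  \sum_(1 <= a < m) f a (m - a)%N.
Proof.
apply: eq_big_nat => a /andP[a1 am].
rewrite (eq_big_nat _ _ (F2 := fun b => if (m - a == b)%N then f a b else 0)).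
  rewrite sum_pred1_nat; case: ifP => //; lia.
move=> b _.
by have -> : (a + b == m)%N = (m - a == b)%N by apply/idP/idP => /eqP H; apply/eqP; lia.
Qed.

Lemma tel (x y : Qt) n : x - y = 1 ->
  \sum_(1 <= a < n.+1) x ^+ a.-1 * y ^+ (n - a)%N = x ^+ n - y ^+ n.
Proof.
move=> Hxy; elim: n => [|n IH]; first by rewrite big_geq // !expr0 subrr.
rewrite big_nat_recr //= subnn expr0 mulr1.
rewrite (eq_big_nat _ _ (F2 := fun a => y * (x ^+ a.-1 * y ^+ (n - a)%N))); last first.
  move=> a /andP[a1 an].
  have -> : (n.+1 - a = (n - a).+1)%N by lia.
  by rewrite exprS mulrCA.
rewrite -mulr_sumr IH.
move/eqP: Hxy; rewrite subr_eq => /eqP ->.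
by rewrite !exprS; ring.
Qed.

Lemma neg1 (x : Qt) j : (0 < j)%N -> (-1) ^+ j * (1 - x) ^+ j.-1 = - (x - 1) ^+ j.-1.
Proof.
case: j => // j _ /=.
by rewrite exprS mulN1r mulNr -exprMn mulN1r opprB.
Qed.

Lemma Hg1 m : (0 < m)%N ->
  (fun m => 1 ^+ m * 'X ^+ m.-1) m + (fun m => (-1) ^+ m * (1 - 'X) ^+ m.-1) m +
  1 * \sum_(1 <= a < m) \sum_(1 <= b < m)
    (if (a + b == m)%N then (fun m => 1 ^+ m * 'X ^+ m.-1) a *
                            (fun m => (-1) ^+ m * (1 - 'X) ^+ m.-1) b else 0) = 0 :> Qt.
Proof.
move=> m0; rewrite collapse /= mul1r expr1n mul1r neg1 //.
case: m m0 => // n _ /=.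
rewrite (eq_big_nat _ _ (F2 := fun a => - ('X ^+ a.-1 * ('X - 1) ^+ (n - a)%N)))
  ; last first.
  move=> a /andP[a1 an].
  rewrite expr1n mul1r neg1; last by lia.
  have -> : ((n.+1 - a).-1 = n - a)%N by lia.
  by rewrite mulrN.
rewrite sumrN tel; last by ring.
ring.
Qed.

Lemma Hg2 m : (0 < m)%N ->
  (fun m => 1 ^+ m * (1 - 2%:R * 'X) ^+ m.-1) m + (fun m => (-1) ^+ m * 0 ^+ m.-1) m +
  (1 - 2%:R * 'X) * \sum_(1 <= a < m) \sum_(1 <= b < m)
    (if (a + b == m)%N then (fun m => 1 ^+ m * (1 - 2%:R * 'X) ^+ m.-1) a *
                            (fun m => (-1) ^+ m * 0 ^+ m.-1) b else 0) = 0 :> Qt.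
Proof.
move=> m0; rewrite collapse /=.
case: m m0 => // [[|n]] _ /=.
  by rewrite big_geq // !expr0 expr1n expr1 !mulr1 mulr0 addr0 subrr.
rewrite big_nat_recr //= subSn // subnn /= expr0 expr1 mulr1.
rewrite big_nat big1 ?add0r; last first.
  move=> a /andP[a1 an].
  rewrite expr0n.
  have -> : ((n.+2 - a).-1 == 0)%N = false by lia.
  by simp.
rewrite expr0n /=; simp.
rewrite !expr1n !mul1r !exprS; ring.
Qed.

Unset Implicit Arguments.

Theorem corollary4p7 (k : nat) : (0 < k)%N ->
  ser_eq (ser_prod harm (S_ser 'X (geom 1 (zk k)))
                        (S_ser (1 - 'X) (geom (-1) (zk k))))
         ser_one
  /\
  ser_eq (ser_prod tharm (S_ser (1 - 2%:R * 'X) (geom 1 (zk k)))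
                         (geom (-1) (zk k)))
         ser_one.
Proof.
move=> k0; split => n w.
  exact: (@GEN 1 0 k (Sfam k 'X 1) (Sfam k (1 - 'X) (-1))
    (fun m => 1 ^+ m * 'X ^+ m.-1) (fun m => (-1) ^+ m * (1 - 'X) ^+ m.-1)
    k0 (family_S 'X k0 1) (family_S (1 - 'X) k0 (-1)) Hg1 n w).
exact: (@GEN (1 - 2%:R * 'X) ('X ^+ 2 - 'X) k (Sfam k (1 - 2%:R * 'X) 1) (geom (-1) (zk k))
    (fun m => 1 ^+ m * (1 - 2%:R * 'X) ^+ m.-1) (fun m => (-1) ^+ m * 0 ^+ m.-1)
    k0 (family_S (1 - 2%:R * 'X) k0 1) (family_geom k0 (-1)) Hg2 n w).
Qed.
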